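(* Let $\langle E,\rightarrow\rangle$ be a computation, $b_1,b_2$ regular predicates and $b=b_1\wedge b_2$. For every event $e$ and process $p_i$, $F_b(e)[i]$ equals or precedes (on $p_i$) $F_{\min}(e)[i]$.
   Context: A computation is a directed graph $\langle E, \rightarrow\rangle$ whose vertices (events) are partitioned among processes $p_1,\dots,p_n$; events on each process are totally ordered, each process has an initial event and a final event, the path relation contains Lamport's happened-before relation, and all initial (resp. final) events lie in one strongly connected component. A vertex subset $C$ is a consistent cut if for every edge $(u,v)$, $v\in C$ implies $u\in C$. A predicate is regular if whenever consistent cuts $C_1,C_2$ satisfy it, so do $C_1\cap C_2$ and $C_1\cup C_2$. The slice of the computation with respect to a predicate $c$ is a directed graph on $E$ whose consistent cuts include every consistent cut satisfying $c$ and which has the fewest consistent cuts among all such graphs. For a regular predicate $c$, $F_c(e)[i]$ is the earliest event on $p_i$ reachable from $e$ by a path in the slice with respect to $c$. $F_{\min}(e)[i]$ is whichever of $F_{b_1}(e)[i]$ and $F_{b_2}(e)[i]$ occurs earlier on $p_i$. *)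

(* Defs.v *)
From mathcomp Require Import all_boot.
Set Implicit Arguments. Unset Strict Implicit. Unset Printing Implicit Defensive.

(* A computation <E, ->> on a finite set of events E.
   - [proc] partitions the events among processes p_0 .. p_(nproc-1);
   - [po x y] : x strictly precedes y on the same process (a strict total
     order on the events of each process);
   - [msg] : the message relation (send -> receive); Lamport's
     happened-before is the transitive closure of [po] and [msg];
   - [edge] : the edges of the directed graph. *)
Record computation (E : finType) := Computation {
  nproc : nat;
  proc : E -> 'I_nproc;
  po : rel E;
  msg : rel E;
  edge : rel E;
  po_same : forall x y, po x y -> proc x = proc y;
  po_irr : irreflexive po;
  po_trans : transitive po;
  po_total : forall x y, proc x = proc y -> x != y -> po x y || po y x;
  has_initial : forall i, exists x, proc x = i /\ forall z, ~~ po z x;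
  has_final : forall i, exists x, proc x = i /\ forall z, ~~ po x z;
  hb_in_path : forall x y, po x y || msg x y -> connect edge x y;
  initial_scc : forall x y, (forall z, ~~ po z x) -> (forall z, ~~ po z y) ->
                connect edge x y;
  final_scc : forall x y, (forall z, ~~ po x z) -> (forall z, ~~ po y z) ->
              connect edge x y
}.

Definition consistent (E : finType) (g : rel E) (C : {set E}) : bool :=
  [forall u, forall v, g u v ==> (v \in C) ==> (u \in C)].

Definition regular (E : finType) (G : computation E) (c : pred {set E}) : Prop :=
  forall C1 C2, consistent (edge G) C1 -> consistent (edge G) C2 ->
    c C1 -> c C2 -> c (C1 :&: C2) && c (C1 :|: C2).

Definition is_slice (E : finType) (G : computation E) (c : pred {set E})
    (s : rel E) : Prop :=
  (forall C, consistent (edge G) C -> c C -> consistent s C) /\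
  (forall g : rel E, (forall C, consistent (edge G) C -> c C -> consistent g C) ->
     #|[set C : {set E} | consistent s C]| <= #|[set C : {set E} | consistent g C]|).

Definition le_po (E : finType) (G : computation E) (x y : E) : bool :=
  (x == y) || po G x y.

Definition pmin (E : finType) (G : computation E) (x y : E) : E :=
  if le_po G x y then x else y.

(* f = F_c(e)[i] where s is the slice w.r.t. c: f is the earliest event on
   p_i reachable from e by a path in s. *)
Definition is_F (E : finType) (G : computation E) (s : rel E) (e : E)
    (i : 'I_(nproc G)) (f : E) : bool :=
  [&& proc G f == i, connect s e f &
      [forall g, (proc G g == i) && connect s e g ==> le_po G f g]].
Arguments is_F {E} G s e i f.

(* Main.v *)
Require Import Defs.
From mathcomp Require Import all_boot.

Lemma consU (E : finType) (s t : rel E) (C : {set E}) :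
  consistent (fun u v => s u v || t u v) C = consistent s C && consistent t C.
Proof.
apply/idP/andP.
- move/forallP=> H; split; apply/forallP=> u; apply/forallP=> v;
  apply/implyP=> suv; have := forallP (H u) v; by rewrite suv ?orbT.
- case=> /forallP H1 /forallP H2; apply/forallP=> u; apply/forallP=> v.
  apply/implyP=> /orP[] suv.
  + by have := forallP (H1 u) v; rewrite suv.
  + by have := forallP (H2 u) v; rewrite suv.
Qed.

Lemma slice_sub (E : finType) (G : computation E) (b b1 : pred {set E}) (s s1 : rel E) :
  (forall C, b C -> b1 C) ->
  is_slice G b s -> is_slice G b1 s1 ->
  forall C, consistent s C -> consistent s1 C.
Proof.
move=> bb1 [Hs Hmin] [Hs1 _] C cC.
pose g := fun u v => s u v || s1 u v.
have Hg : forall C, consistent (edge G) C -> b C -> consistent g C.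
  by move=> D cD bD; rewrite /g consU Hs // Hs1 // bb1.
have := Hmin g Hg.
have sub : [set C : {set E} | consistent g C] \subset [set C : {set E} | consistent s C].
  by apply/subsetP=> D; rewrite !inE /g consU => /andP[].
move=> le.
have eq : [set C : {set E} | consistent g C] = [set C : {set E} | consistent s C].
  by apply/eqP; rewrite eqEcard sub le.
have : C \in [set C : {set E} | consistent g C] by rewrite eq inE.
by rewrite inE /g consU => /andP[].
Qed.

Lemma reach_sub (E : finType) (s s1 : rel E) :
  (forall C, consistent s C -> consistent s1 C) ->
  forall e x, connect s1 e x -> connect s e x.
Proof.
move=> H e x.
pose D := [set y | ~~ connect s e y].
have cD : consistent s D.
  apply/forallP=> u; apply/forallP=> v; apply/implyP=> suv.
  rewrite !inE; apply/implyP; apply: contra => ceu.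
  by apply: connect_trans ceu (connect1 suv).
have := H _ cD => /forallP c1.
case/connectP=> p pth ->.
suff gen : forall z, connect s e z -> path s1 z p -> connect s e (last z p).
  by apply: gen pth; rewrite connect0.
elim: p {pth} => [|y p IH] z cz //= /andP[sy pth].
apply: (IH y) pth.
have := forallP (c1 z) y; rewrite sy /= !inE.
by case: (connect s e y) => //; rewrite cz.
Qed.

Theorem lemma13 (E : finType) (G : computation E) (b1 b2 : pred {set E})
    (s s1 s2 : rel E) :
  regular G b1 -> regular G b2 ->
  is_slice G (fun C => b1 C && b2 C) s ->
  is_slice G b1 s1 -> is_slice G b2 s2 ->
  forall (e : E) (i : 'I_(nproc G)) (f f1 f2 : E),
    is_F G s e i f -> is_F G s1 e i f1 -> is_F G s2 e i f2 ->
    le_po G f (pmin G f1 f2).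
Proof.
move=> _ _ Hs Hs1 Hs2 e i f f1 f2 /and3P[_ _ /forallP Hf]
  /and3P[p1 c1 _] /and3P[p2 c2 _].
have r1 := @reach_sub _ _ _ (@slice_sub _ _ _ _ _ _ (fun C (H : b1 C && b2 C) => proj1 (andP H)) Hs Hs1).
have r2 := @reach_sub _ _ _ (@slice_sub _ _ _ _ _ _ (fun C (H : b1 C && b2 C) => proj2 (andP H)) Hs Hs2).
rewrite /pmin; case: ifP => _.
- by have := Hf f1; rewrite p1 r1.
- by have := Hf f2; rewrite p2 r2.
Qed.
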